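(* Let $\mathcal M=(S,A,P)$ be an MDP, $T\subseteq S$ a set of sink target states, $s_0\in S$ with $\mathrm{Val}(s_0)>0$, and $\mathcal M'$ the pruned MDP. Let $\sigma^*$ be a strategy of $\mathcal M'$ minimizing $\mathbb E'_{\sigma,s_0}(\mathrm{len}_T)$ over all strategies $\sigma$ of $\mathcal M'$. Then (1) $\Pr_{\sigma^*,s_0}(\Diamond T)=\mathrm{Val}(s_0)$, and (2) $\mathbb E_{\sigma^*,s_0}(\mathrm{len}_T\mid\Diamond T)=\min_{\sigma\in\Sigma_{\mathcal M,s_0}(\Diamond T)}\mathbb E_{\sigma,s_0}(\mathrm{len}_T\mid\Diamond T)$.
   Context: An MDP is $\mathcal M=(S,A,P)$ with $S,A$ finite and $P$ a partial map $S\times A\to\mathrm{Dist}(S)$; $a$ is legal at $s$ if $P(s,a)$ is defined; $P(s,a,s')=P(s,a)(s')$. A strategy maps finite paths to distributions over legal actions at the last state (history-dependent, randomized). $\Pr_{\sigma,s}$, $\mathbb E_{\sigma,s}$ are the induced probability measure and expectation on infinite paths from $s$. States of $T$ are sinks (single legal action, self-loop with probability 1); $\Diamond T$ is the event of visiting $T$; $\mathrm{Val}(s)=\max_\sigma\Pr_{\sigma,s}(\Diamond T)$; $\Sigma_{\mathcal M,s}(\Diamond T)$ is the set of strategies with $\Pr_{\sigma,s}(\Diamond T)=\mathrm{Val}(s)$. $\mathrm{len}_T(\rho)$ is the least $i$ with $\rho[i]\in T$ ($\infty$ if none). $\mathbb E_{\sigma,s}(\mathrm{len}_T\mid\Diamond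 T)=\sum_{r\ge0}r\cdot\Pr_{\sigma,s}(\Diamond T\wedge\mathrm{len}_T=r)/\Pr_{\sigma,s}(\Diamond T)$. $\mathrm{Opt}_{\mathcal M}=\{(s,a): a\text{ legal at }s,\ \mathrm{Val}(s)=\sum_{s'}P(s,a,s')\mathrm{Val}(s')\}$. The pruned MDP $\mathcal M'=(S',A,P')$ has $S'=\{s:\mathrm{Val}(s)>0\}$ and $P'(s,a,s')=P(s,a,s')\mathrm{Val}(s')/\mathrm{Val}(s)$ if $s\in S'$ and $(s,a)\in\mathrm{Opt}_{\mathcal M}$ (undefined otherwise). Strategies of $\mathcal M'$ are identified with strategies of $\mathcal M$ that after every finite path only play actions $a$ with $(\mathrm{last}(\rho),a)\in\mathrm{Opt}_{\mathcal M}$; $\mathbb E'_{\sigma,s}$ is the expectation in $\mathcal M'$. *)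

(* Defs.v *)
From HB Require Import structures.
From mathcomp Require Import all_boot all_order all_algebra.
From mathcomp Require Import all_classical all_reals ereal sequences.
Set Implicit Arguments. Unset Strict Implicit. Unset Printing Implicit Defensive.
Import Order.TTheory GRing.Theory Num.Theory.
Local Open Scope ring_scope.
Local Open Scope ereal_scope.

(* An MDP over finite state space S and action space A:
   [legal s a] says P(s,a) is defined; [P s a s'] = P(s,a)(s') (only
   meaningful when [legal s a]). *)
Definition is_MDP (R : realType) (S A : finType)
    (legal : S -> A -> bool) (P : S -> A -> S -> R) : Prop :=
  forall s a, legal s a ->
    (forall s', (0 <= P s a s')%R) /\ (\sum_(s' : S) P s a s')%R = 1%R.

Definition sinks (R : realType) (S A : finType)
    (legal : S -> A -> bool) (P : S -> A -> S -> R) (T : {set S}) : Prop :=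
  forall s, s \in T ->
    exists a, [/\ legal s a, (forall b, legal s b -> b = a) & P s a s = 1%R].

(* A (history-dependent, randomized) strategy: given the finite path
   s_0 a_0 ... s_{n-1} a_{n-1} s_n, encoded as the list of pairs
   [(s_0,a_0);...;(s_{n-1},a_{n-1})] and the last state s_n, it returns
   a distribution over the actions legal at s_n. *)
Definition strategy (R : realType) (S A : finType) :=
  seq (S * A) -> S -> A -> R.

Definition is_strategy (R : realType) (S A : finType)
    (legal : S -> A -> bool) (sigma : strategy R S A) : Prop :=
  forall h s,
    [/\ (forall a, (0 <= sigma h s a)%R),
        (\sum_(a : A) sigma h s a)%R = 1%R &
        (forall a, (0 < sigma h s a)%R -> legal s a)].

(* hit P T sigma h s r = probability, in the path measure induced by
   sigma from the current path (h, s) with transition function P, that the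
   first visit to T happens exactly r steps later.  With h = [::] this is
   Pr_{sigma,s}(Diamond T /\ len_T = r), i.e. the measure of the
   corresponding (finite union of) cylinder sets. *)
Fixpoint hit (R : realType) (S A : finType) (P : S -> A -> S -> R)
    (T : {set S}) (sigma : strategy R S A) (h : seq (S * A)) (s : S)
    (r : nat) : R :=
  match r with
  | 0 => if s \in T then 1%R else 0%R
  | r'.+1 =>
      if s \in T then 0%R
      else (\sum_(a : A) sigma h s a *
              \sum_(s' : S) P s a s' * hit P T sigma (rcons h (s, a)) s' r')%R
  end.

Definition PrReach (R : realType) (S A : finType) (P : S -> A -> S -> R)
    (T : {set S}) (sigma : strategy R S A) (s : S) : \bar R :=
  \sum_(r <oo) (hit P T sigma [::] s r)%:E.

Definition Val (R : realType) (S A : finType) (legal : S -> A -> bool)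
    (P : S -> A -> S -> R) (T : {set S}) (s : S) : \bar R :=
  ereal_sup [set PrReach P T sigma s | sigma in [set sigma | is_strategy legal sigma]].

Definition OptReachStrats (R : realType) (S A : finType) (legal : S -> A -> bool)
    (P : S -> A -> S -> R) (T : {set S}) (s : S) : set (strategy R S A) :=
  [set sigma | is_strategy legal sigma /\ PrReach P T sigma s = Val legal P T s].

Definition Opt (R : realType) (S A : finType) (legal : S -> A -> bool)
    (P : S -> A -> S -> R) (T : {set S}) (s : S) (a : A) : Prop :=
  legal s a /\ Val legal P T s = \sum_(s' : S) (P s a s')%:E * Val legal P T s'.

(* Transition function of the pruned MDP M' (only used at states with
   Val > 0 and optimal actions, which are the only ones reachable/played). *)
Definition Ppruned (R : realType) (S A : finType) (legal : S -> A -> bool)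
    (P : S -> A -> S -> R) (T : {set S}) (s : S) (a : A) (s' : S) : R :=
  (P s a s' * fine (Val legal P T s') / fine (Val legal P T s))%R.

(* Strategies of M', identified with strategies of M that after every
   finite path only play actions in Opt_M. *)
Definition is_pruned_strategy (R : realType) (S A : finType)
    (legal : S -> A -> bool) (P : S -> A -> S -> R) (T : {set S})
    (sigma : strategy R S A) : Prop :=
  is_strategy legal sigma /\
  forall h s a, (0 < sigma h s a)%R -> Opt legal P T s a.

(* E'_{sigma,s}(len_T) : expectation of the [0,oo]-valued len_T in M',
   i.e. sum_r r Pr'(len_T = r) + oo * Pr'(len_T = oo) (with 0 * oo = 0). *)
Definition ExpLenPruned (R : realType) (S A : finType) (legal : S -> A -> bool)
    (P : S -> A -> S -> R) (T : {set S}) (sigma : strategy R S A) (s : S)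
    : \bar R :=
  let P' := Ppruned legal P T in
  \sum_(r <oo) (r%:R * hit P' T sigma [::] s r)%:E
  + +oo * (1 - PrReach P' T sigma s).

Definition CondExpLen (R : realType) (S A : finType) (P : S -> A -> S -> R)
    (T : {set S}) (sigma : strategy R S A) (s : S) : \bar R :=
  \sum_(r <oo) ((r%:R * hit P T sigma [::] s r)%:E / PrReach P T sigma s).

(* Main.v *)
Require Import Defs.
From HB Require Import structures.
From mathcomp Require Import all_boot all_order all_algebra.
From mathcomp Require Import all_classical all_reals ereal sequences.
From mathcomp Require Import topology normedtype.
From mathcomp.algebra_tactics Require Import ring lra.
Import Order.TTheory GRing.Theory Num.Theory.
Local Open Scope ring_scope.
Set Implicit Arguments. Unset Strict Implicit. Unset Printing Implicit Defensive.

Local Open Scope ring_scope.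

Section MDP.
Variables (R : realType) (S A : finType) (legal : S -> A -> bool)
  (P : S -> A -> S -> R) (T : {set S}).
Hypothesis HM : is_MDP legal P.

Lemma hit_ge0 sigma : is_strategy legal sigma -> forall r h s,
  0 <= hit P T sigma h s r.
Proof.
move=> Hs; elim=> [|r IH] h s /=; first by case: ifP.
case: ifP => // _; apply: sumr_ge0 => a _.
have [H0 _ Hl] := Hs h s.
have := H0 a; rewrite le_eqVlt => /orP[/eqP <-|/Hl la]; first by rewrite mul0r.
apply: mulr_ge0 => //; apply: sumr_ge0 => s' _; apply: mulr_ge0 => //.
by have [->] := HM la.
Qed.

Lemma super_bound (g : S -> R) sigma : is_strategy legal sigma ->
  (forall s, 0 <= g s) -> (forall t, t \in T -> 1 <= g t) ->
  (forall s a, s \notin T -> legal s a -> \sum_(s' : S) P s a s' * g s' <= g s) ->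
  forall n h s, \sum_(0 <= r < n) hit P T sigma h s r <= g s.
Proof.
move=> Hs g0 gT gsup; elim=> [|n IH] h s; first by rewrite big_geq.
rewrite big_nat_recl //=; case: ifP => sT.
  rewrite big1 ?addr0 ?gT // => r _ /=; by rewrite sT.
rewrite add0r.
rewrite /=.
rewrite exchange_big /=.
have [H0 H1 Hl] := Hs h s.
apply: (@le_trans _ _ (\sum_(a : A) sigma h s a * g s)); last first.
  by rewrite -big_distrl /= H1 mul1r.
apply: ler_sum => a _; rewrite -big_distrr /=.
have := H0 a; rewrite le_eqVlt => /orP[/eqP <-|sa]; first by rewrite !mul0r.
apply: ler_wpM2l => //; apply: le_trans (gsup _ _ (negbT sT) (Hl _ sa)).
rewrite exchange_big /=; apply: ler_sum => s' _; rewrite -big_distrr /=.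
by apply: ler_wpM2l; [have [->] := HM (Hl _ sa)| exact: IH].
Qed.

End MDP.
Section Series.
Variable R : realType.
Local Open Scope ereal_scope.

Lemma series_le (u : nat -> R) (b : R) : (forall r, (0 <= u r)%R) ->
  (forall n, (\sum_(0 <= r < n) u r <= b)%R) -> \sum_(r <oo) (u r)%:E <= b%:E.
Proof.
move=> u0 ub; apply: lime_le.
  by apply: is_cvg_nneseries => n _ _; rewrite lee_fin.
by apply: nearW => n; rewrite sumEFin lee_fin.
Qed.

Lemma series_ge (u : nat -> R) n : (forall r, (0 <= u r)%R) ->
  (\sum_(0 <= r < n) u r)%:E <= \sum_(r <oo) (u r)%:E.
Proof.
move=> u0; rewrite -sumEFin; apply: nneseries_lim_ge => k _ _.
by rewrite lee_fin.
Qed.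

Lemma series_ge0 (u : nat -> R) : (forall r, (0 <= u r)%R) ->
  0 <= \sum_(r <oo) (u r)%:E.
Proof. by move=> u0; apply: nneseries_ge0 => n _ _; rewrite lee_fin. Qed.

Lemma series_shift (u : nat -> R) : (forall r, (0 <= u r)%R) ->
  \sum_(r <oo) (u r)%:E = (u 0%N)%:E + \sum_(r <oo) (u r.+1)%:E.
Proof.
move=> u0; rewrite nneseries_recl //; last by move=> k _; rewrite lee_fin.
congr (_ + _); rewrite -(@nneseries_addn _ (fun r => (u r)%:E) 1); last first.
  by move=> i; rewrite lee_fin.
by apply: congr_lim; apply/funext => n; apply: eq_bigr => i _; rewrite addn1.
Qed.

End Series.

Local Open Scope ring_scope.

Section Val.
Variables (R : realType) (S A : finType) (legal : S -> A -> bool)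
  (P : S -> A -> S -> R) (T : {set S}).
Hypothesis HM : is_MDP legal P.
Hypothesis Hex : exists sigma : strategy R S A, is_strategy legal sigma.

Lemma hge0 sigma (Hs : is_strategy legal sigma) r h s : 0 <= hit P T sigma h s r.
Proof. exact: (hit_ge0 T HM Hs r h s). Qed.

Definition v s := fine (Val legal P T s).

Lemma PrReach_ge0 sigma s : is_strategy legal sigma -> (0 <= PrReach P T sigma s)%E.
Proof. move=> Hs; rewrite /PrReach; apply: series_ge0 => r. exact: hge0. Qed.

Lemma PrReach_le sigma s (g : S -> R) : is_strategy legal sigma ->
  (forall s, 0 <= g s) -> (forall t, t \in T -> 1 <= g t) ->
  (forall s a, s \notin T -> legal s a -> \sum_s' P s a s' * g s' <= g s) ->
  (PrReach P T sigma s <= (g s)%:E)%E.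
Proof.
move=> Hs g0 gT gs; rewrite /PrReach; apply: series_le => [r|n]; first exact: hge0.
exact: (super_bound HM Hs g0 gT gs n [::] s).
Qed.

Lemma PrReach_le1 sigma s : is_strategy legal sigma -> (PrReach P T sigma s <= 1)%E.
Proof.
move=> Hs; apply: (@PrReach_le sigma s (fun=> 1) Hs) => // s' a _ la.
by under eq_bigr do rewrite mulr1; have [_ ->] := HM la.
Qed.

Lemma Val_le1 s : (Val legal P T s <= 1)%E.
Proof. by apply: ge_ereal_sup => x [sigma Hs <-]; exact: PrReach_le1. Qed.

Lemma Val_ge s sigma : is_strategy legal sigma ->
  (PrReach P T sigma s <= Val legal P T s)%E.
Proof. by move=> Hs; apply: ereal_sup_ubound; exists sigma. Qed.

Lemma Val_ge0 s : (0 <= Val legal P T s)%E.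
Proof.
by case: Hex => sigma Hs; apply: le_trans (PrReach_ge0 _ Hs) (Val_ge _ Hs).
Qed.

Lemma ValE s : Val legal P T s = (v s)%:E.
Proof.
rewrite /v fineK // ge0_fin_numE ?Val_ge0 //.
exact: le_lt_trans (Val_le1 s) (ltry _).
Qed.

Lemma v_ge0 s : 0 <= v s.
Proof. by have := Val_ge0 s; rewrite ValE lee_fin. Qed.

Lemma v_le1 s : v s <= 1.
Proof. by have := Val_le1 s; rewrite ValE lee_fin. Qed.

Lemma PrReachT sigma t : is_strategy legal sigma -> t \in T ->
  PrReach P T sigma t = 1%E.
Proof.
move=> Hs tT; apply/le_anti/andP; split; first exact: PrReach_le1.
have := series_ge 1 (fun r => hge0 Hs r [::] t).
by rewrite big_nat1 /= tT.
Qed.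

Lemma vT t : t \in T -> v t = 1.
Proof.
move=> tT; apply/le_anti; rewrite v_le1 /=; case: Hex => sigma Hs.
by have := Val_ge t Hs; rewrite PrReachT // ValE lee_fin.
Qed.

Definition fst_state (h : seq (S * A)) (t : S) := if h is x :: _ then x.1 else t.

Definition comb (s : S) (a : A) (tau : S -> strategy R S A) : strategy R S A :=
  fun h t => match h with
   | [::] => if t == s then (fun b => ((b == a)%:R : R)) else tau t [::] t
   | _ :: h' => tau (fst_state h' t) h' t end.

Lemma comb_strat s a tau : legal s a -> (forall u, is_strategy legal (tau u)) ->
  is_strategy legal (comb s a tau).
Proof.
move=> la Ht h t; case: h => [|x h'] /=; last exact: Ht.
case: eqP => [->|_]; last exact: Ht.
split => [b||b]; first by rewrite ler0n.
  by rewrite (bigD1 a) //= eqxx big1 ?addr0 // => b /negbTE ->.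
by case: eqP => [->|] //; rewrite ltxx.
Qed.

Lemma comb_hit s a tau r : forall h' t,
  hit P T (comb s a tau) ((s, a) :: h') t r = hit P T (tau (fst_state h' t)) h' t r.
Proof.
elim: r => [|r IH] h' t //=; case: ifP => // _.
apply: eq_bigr => b _; congr (_ * _); apply: eq_bigr => t' _.
by rewrite IH; congr (_ * hit _ _ (tau _) _ _ _); case: h'.
Qed.

Lemma comb_hit0 s a tau r : s \notin T ->
  hit P T (comb s a tau) [::] s r.+1 = \sum_s' P s a s' * hit P T (tau s') [::] s' r.
Proof.
move=> sT /=; rewrite (negbTE sT) eqxx (bigD1 a) //= eqxx mul1r [X in _ + X]big1 ?addr0.
  by apply: eq_bigr => s' _; rewrite comb_hit.
by move=> b /negbTE ->; rewrite mul0r.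
Qed.

Lemma bellman s a : s \notin T -> legal s a -> \sum_s' P s a s' * v s' <= v s.
Proof.
move=> sT la; apply/ler_addgt0Pr => e e0.
have: forall u, exists tau, is_strategy legal tau /\
    ((v u - e)%:E < PrReach P T tau u)%E.
  move=> u; have: ((v u - e)%:E < Val legal P T u)%E.
    by rewrite ValE lte_fin ltrBlDr ltrDl.
  by move/ereal_sup_gt => [x [tau Ht <-] lt]; exists tau.
case/choice => tau Htau.
have Hr : is_strategy legal (comb s a tau) := comb_strat la (fun u => (Htau u).1).
have := Val_ge s Hr; rewrite ValE /PrReach series_shift; last by move=> r; apply: hge0.
have -> : hit P T (comb s a tau) [::] s 0 = 0 by rewrite /= (negbTE sT).
rewrite add0e.
have -> : (\sum_(r <oo) (hit P T (comb s a tau) [::] s r.+1)%:E =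
    \sum_(r <oo) \sum_s' ((P s a s')%:E * (hit P T (tau s') [::] s' r)%:E))%E.
  apply: congr_lim; apply/funext => n; apply: eq_bigr => r _.
  by rewrite comb_hit0 // -sumEFin; apply: eq_bigr => s' _; rewrite EFinM.
rewrite nneseries_sum; last first.
  move=> s' r _; rewrite -EFinM lee_fin; apply: mulr_ge0; last by apply: hge0; exact: (Htau _).1.
  by have [->] := HM la.
have -> : (\sum_i \sum_(j <oo) ((P s a i)%:E * (hit P T (tau i) [::] i j)%:E)
   = \sum_i (P s a i)%:E * PrReach P T (tau i) i)%E.
  apply: eq_bigr => i _; rewrite nneseriesZl // => j _.
  by rewrite lee_fin; apply: hge0; exact: (Htau _).1.
move=> H.
have -> : \sum_s' P s a s' * v s' = \sum_s' P s a s' * (v s' - e) + e.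
  under [in RHS]eq_bigr do rewrite mulrBr.
  by rewrite sumrB -big_distrl /= (proj2 (HM la)) mul1r subrK.
rewrite lerD2r -lee_fin; apply: le_trans H.
rewrite -sumEFin; apply: lee_sum => s' _; rewrite EFinM.
apply: lee_wpmul2l; first by rewrite lee_fin; have [->] := HM la.
exact: ltW (Htau s').2.
Qed.

End Val.

Local Open Scope ring_scope.

Section Opt.
Variables (R : realType) (S A : finType) (legal : S -> A -> bool)
  (P : S -> A -> S -> R) (T : {set S}).
Hypothesis HM : is_MDP legal P.
Hypothesis Hex : exists sigma : strategy R S A, is_strategy legal sigma.

Local Notation v := (v legal P T).

Lemma OptE s a : Opt legal P T s a <->
  legal s a /\ v s = \sum_s' P s a s' * v s'.
Proof.
rewrite /Opt (ValE T HM Hex).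
have -> : (\sum_s' (P s a s')%:E * Val legal P T s' =
   (\sum_s' P s a s' * v s')%:E)%E.
  by rewrite -sumEFin; apply: eq_bigr => s' _; rewrite (ValE T HM Hex) EFinM.
by split=> -[la H]; split=> //; [case: H | rewrite H].
Qed.

Lemma psum_le_v sigma : is_strategy legal sigma ->
  forall n h s, \sum_(0 <= r < n) hit P T sigma h s r <= v s.
Proof.
move=> Hs; apply: (super_bound HM Hs).
- exact: v_ge0 T HM Hex.
- by move=> t tT; rewrite (vT HM Hex tT).
- move=> s a sT la; have H := bellman HM Hex sT la. exact: H.
Qed.

Lemma hit_le_v sigma : is_strategy legal sigma ->
  forall r h s, hit P T sigma h s r <= v s.
Proof.
move=> Hs r h s; apply: le_trans (psum_le_v Hs r.+1 h s).
rewrite big_nat_recr //= lerDr; apply: sumr_ge0 => i _; exact: (hge0 T HM Hs).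
Qed.

Lemma hit_v0 sigma : is_strategy legal sigma ->
  forall r h s, v s = 0 -> hit P T sigma h s r = 0.
Proof.
move=> Hs r h s v0; apply/le_anti; rewrite (hge0 T HM Hs) andbT -v0.
exact: hit_le_v.
Qed.

Lemma PprunedE s a s' : Ppruned legal P T s a s' = P s a s' * v s' / v s.
Proof. by []. Qed.

Lemma hit_pruned sigma : is_strategy legal sigma ->
  forall r h s, v s * hit (Ppruned legal P T) T sigma h s r = hit P T sigma h s r.
Proof.
move=> Hs; elim=> [|r IH] h s.
  by rewrite /=; case: ifP => sT; [rewrite (vT HM Hex sT) mulr1|rewrite mulr0].
have [v0|vn0] := eqVneq (v s) 0.
  by rewrite v0 mul0r (hit_v0 Hs _ _ v0).
rewrite /=; case: ifP => sT; first by rewrite mulr0.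
rewrite big_distrr; apply: eq_bigr => a _ /=; rewrite mulrCA; congr (_ * _).
rewrite big_distrr; apply: eq_bigr => s' _ /=; rewrite -IH PprunedE.
by field.
Qed.

End Opt.

Local Open Scope ring_scope.

Lemma prod_le_factor (R : realType) (I : finType) (Q : pred I) (F : I -> R) i0 :
  (forall i, Q i -> 0 <= F i <= 1) -> Q i0 -> \prod_(i | Q i) F i <= F i0.
Proof.
move=> F01 Qi0; rewrite (bigD1 i0) //=; apply: ler_piMr.
  by have /andP[] := F01 _ Qi0.
by apply: prodr_ile1 => i /andP[/F01].
Qed.

Section Rank.
Variables (R : realType) (S A : finType) (legal : S -> A -> bool)
  (P : S -> A -> S -> R) (T : {set S}).
Hypothesis HM : is_MDP legal P.
Hypothesis Hex : exists sigma : strategy R S A, is_strategy legal sigma.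

Local Notation v := (v legal P T).
Let vge0 s : 0 <= v s. Proof. exact: (v_ge0 T HM Hex). Qed.
Let vle1 s : v s <= 1. Proof. exact: (v_le1 T HM Hex). Qed.
Let vT1 t : t \in T -> v t = 1. Proof. exact: (vT HM Hex). Qed.
Let bell s a : s \notin T -> legal s a -> \sum_s' P s a s' * v s' <= v s.
Proof. exact: (bellman HM Hex). Qed.

Lemma P_ge0 s a s' : legal s a -> 0 <= P s a s'.
Proof. by move=> la; have [->] := HM la. Qed.

Lemma P_sum1 s a : legal s a -> \sum_s' P s a s' = 1.
Proof. by move=> la; have [_ ->] := HM la. Qed.

Lemma P_le1 s a s' : legal s a -> P s a s' <= 1.
Proof.
move=> la; rewrite -(P_sum1 la) (bigD1 s') //= lerDl.
by apply: sumr_ge0 => i _; exact: P_ge0.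
Qed.

Fixpoint Tk (k : nat) : {set S} :=
  if k is k'.+1 then Tk k' :|: [set s | (0 < v s) &&
     `[< exists a, Opt legal P T s a /\ exists2 s', s' \in Tk k' & 0 < P s a s' >]]
  else T.

Lemma Tk_pos k s : s \in Tk k -> 0 < v s.
Proof.
elim: k s => [|k IH] s /=; first by move=> /vT1 ->.
by rewrite finset.in_setU finset.inE => /orP[/IH //|/andP[]].
Qed.

Lemma ranked s : 0 < v s -> exists k, s \in Tk k.
Proof.
move=> vs; apply: contrapT => Hn.
pose W := [set s | (0 < v s) && `[< forall k, s \notin Tk k >]].
have sW : s \in W.
  rewrite finset.inE vs /=; apply/asboolP => k; apply/negP => H; apply: Hn; by exists k.
have WT x : x \in W -> x \notin T.
  by rewrite finset.inE => /andP[_ /asboolP /(_ 0%N)].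
case: (arg_maxP v sW) => m mW0 mmax0.
have mW : m \in W by exact: mW0.
have mmax x : x \in W -> v x <= v m by move=> xW; exact: mmax0.
set c := v m.
have c0 : 0 < c by move: mW; rewrite finset.inE => /andP[].
have P1 x a y : x \in W -> Opt legal P T x a -> 0 < P x a y -> (y \in W) || (v y == 0).
  move=> xW Oa Pp; have [vy0|vy0] := eqVneq (v y) 0; first by apply/orP; right; apply/eqP.
  rewrite orbF finset.inE lt_neqAle eq_sym vy0 vge0 /=; apply/asboolP => k.
  apply/negP => yk; move: xW; rewrite finset.inE => /andP[vx /asboolP /(_ k.+1)].
  rewrite /= finset.in_setU negb_or finset.inE vx /= => /andP[_ /negP]; apply.
  by apply/asboolP; exists a; split => //; exists y.
have P2 x a y : x \in W -> v x = c -> Opt legal P T x a -> 0 < P x a y ->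
    (y \in W) /\ v y = c.
  move=> xW vxc Oa Pp; have [la Heq] := (OptE T HM Hex x a).1 Oa.
  have Hle z : 0 < P x a z -> v z <= c.
    move=> Pz; case/orP: (P1 _ _ _ xW Oa Pz) => [/mmax //|/eqP ->].
    exact: ltW.
  have H0 : \sum_z P x a z * (c - v z) = 0.
    under eq_bigr do rewrite mulrBr.
    by rewrite sumrB -big_distrl /= P_sum1 // mul1r -Heq vxc subrr.
  have Hterm z : 0 <= P x a z * (c - v z).
    have [->|Pz] := eqVneq (P x a z) 0; first by rewrite mul0r.
    apply: mulr_ge0; first exact: P_ge0.
    by rewrite subr_ge0; apply: Hle; rewrite lt_neqAle eq_sym Pz P_ge0.
  have := psumr_eq0P (fun z _ => Hterm z) H0 (i := y) isT.
  move/eqP; rewrite mulf_eq0 gt_eqF //= subr_eq0 => /eqP vyc.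
  split=> //; case/orP: (P1 _ _ _ xW Oa Pp) => [//|/eqP vy0].
  by move: c0; rewrite vyc vy0 ltxx.
pose W' := [set x | (x \in W) && (v x == c)].
have mW' : m \in W' by rewrite finset.inE mW eqxx.
pose Q := [pred x : S * A | (x.1 \in W') && legal x.1 x.2 &&
   ~~ `[< Opt legal P T x.1 x.2 >]].
pose gap (x : S * A) := v x.1 - \sum_y P x.1 x.2 y * v y.
have gap01 x : Q x -> 0 < gap x <= 1.
  case: x => x a /andP[/andP[xW' la] nO] /=.
  move: xW'; rewrite finset.inE => /andP[xW _].
  rewrite subr_gt0 lt_neqAle bell ?WT // andbT.
  apply/andP; split.
    apply/negP => /eqP He; move/asboolP: nO; apply; apply/(OptE T HM Hex).
    by split.
  rewrite lerBlDr; apply: le_trans (vle1 _) _; rewrite lerDl.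
  by apply: sumr_ge0 => y _; apply: mulr_ge0 => //; exact: P_ge0.
pose pr := \prod_(x | Q x) gap x.
have pr0 : 0 < pr by apply: prodr_gt0 => x /gap01 /andP[].
have pr1 : pr <= 1.
  by apply: prodr_ile1 => x /gap01 /andP[/ltW -> ->].
have prgap x : Q x -> pr <= gap x.
  move=> Qx; apply: prod_le_factor => // i /gap01 /andP[/ltW -> ->] //.
pose eta := c * pr.
have eta0 : 0 < eta by apply: mulr_gt0.
have etac : eta <= c by apply: ler_piMr => //; exact: ltW.
have etagap x : Q x -> eta <= gap x.
  move=> Qx; apply: le_trans (prgap _ Qx); apply: ler_piMl; first exact: ltW.
  exact: vle1.
pose g y := v y - eta * (y \in W')%:R.
have g0 y : 0 <= g y.
  rewrite /g; case yW' : (y \in W'); last by rewrite mulr0 subr0.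
  move: yW'; rewrite finset.inE => /andP[_ /eqP ->].
  by rewrite mulr1 subr_ge0.
have gT t : t \in T -> 1 <= g t.
  move=> tT; rewrite /g; have -> : (t \in W') = false.
    apply/negP; rewrite finset.inE => /andP[/WT]; by rewrite tT.
  by rewrite mulr0 subr0 vT1.
have gsup s' a : s' \notin T -> legal s' a -> \sum_y P s' a y * g y <= g s'.
  move=> sT la.
  have -> : \sum_y P s' a y * g y =
      \sum_y P s' a y * v y - eta * \sum_y P s' a y * (y \in W')%:R.
    rewrite big_distrr -sumrB; apply: eq_bigr => y _ /=; rewrite /g.
    by rewrite mulrBr mulrCA.
  have Hnn : 0 <= eta * \sum_y P s' a y * (y \in W')%:R.
    apply: mulr_ge0; first exact: ltW.
    by apply: sumr_ge0 => y _; apply: mulr_ge0 => //; exact: P_ge0.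
  rewrite /g; case sW' : (s' \in W'); last first.
    by rewrite mulr0 subr0; apply: le_trans (bell sT la); rewrite lerBlDr lerDl.
  rewrite mulr1.
  move: (sW'); rewrite finset.inE => /andP[xW0 /eqP vsc].
  case: (pselect (Opt legal P T s' a)) => Oa.
    have [_ Heq] := (OptE T HM Hex s' a).1 Oa.
    have -> : \sum_y P s' a y * (y \in W')%:R = 1.
      rewrite -[RHS](P_sum1 la); apply: eq_bigr => y _.
      have [->|Py] := eqVneq (P s' a y) 0; first by rewrite mul0r.
      have Pyp : 0 < P s' a y by rewrite lt_neqAle eq_sym Py P_ge0.
      have [yW vyc] := P2 _ _ _ xW0 vsc Oa Pyp.
      by rewrite finset.inE yW vyc eqxx mulr1.
    by rewrite -Heq mulr1.
  have Qs : Q (s', a) by rewrite /Q /= sW' la /=; apply/negP => /asboolP.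
  have := etagap _ Qs; rewrite /gap /= => Hg.
  apply: le_trans (_ : \sum_y P s' a y * v y <= _).
    by rewrite lerBlDr lerDl.
  by rewrite lerBrDr -lerBrDl.
have : (Val legal P T m <= (g m)%:E)%E.
  apply: ge_ereal_sup => x [sigma Hs <-].
  exact: (PrReach_le HM m Hs g0 gT gsup).
rewrite (ValE T HM Hex) lee_fin /g mW' mulr1 -/c.
move=> H; have Hl : c - eta < c by rewrite ltrBlDr ltrDl.
by move: Hl; rewrite ltNge H.
Qed.


End Rank.

Local Open Scope ring_scope.

Section Memless.
Variables (R : realType) (S A : finType) (legal : S -> A -> bool)
  (P : S -> A -> S -> R) (T : {set S}).
Hypothesis HM : is_MDP legal P.
Hypothesis HT : sinks legal P T.
Hypothesis Hex : exists sigma : strategy R S A, is_strategy legal sigma.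

Local Notation v := (v legal P T).
Let vge0 s : 0 <= v s. Proof. exact: (v_ge0 T HM Hex). Qed.
Let vle1 s : v s <= 1. Proof. exact: (v_le1 T HM Hex). Qed.
Let vT1 t : t \in T -> v t = 1. Proof. exact: (vT HM Hex). Qed.
Let bell s a : s \notin T -> legal s a -> \sum_s' P s a s' * v s' <= v s.
Proof. exact: (bellman HM Hex). Qed.
Let OptE' s a : Opt legal P T s a <-> legal s a /\ v s = \sum_s' P s a s' * v s'.
Proof. exact: (OptE T HM Hex). Qed.
Let Pge0 s a s' : legal s a -> 0 <= P s a s'. Proof. exact: P_ge0. Qed.
Let Psum1 s a : legal s a -> \sum_s' P s a s' = 1. Proof. exact: P_sum1. Qed.

Definition rk (s : S) : nat :=
  match pselect (exists k, s \in Tk legal P T k) with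
  | left H => ex_minn H
  | right _ => 0%N
  end.

Lemma rk_spec s : 0 < v s ->
  s \in Tk legal P T (rk s) /\ forall k, s \in Tk legal P T k -> (rk s <= k)%N.
Proof.
move=> vs; rewrite /rk; case: pselect => [H|H]; last first.
  by exfalso; apply: H; exact: (ranked HM Hex vs).
by case: (ex_minnP H) => m Hm Hmin.
Qed.

Lemma choose_fd : exists F : S -> A * S, forall s,
  Opt legal P T s (F s).1 /\ (0 < v s -> s \notin T ->
   [/\ 0 < P s (F s).1 (F s).2, 0 < v (F s).2 & (rk (F s).2 < rk s)%N]).
Proof.
suff: forall s, exists p : A * S, Opt legal P T s p.1 /\ (0 < v s -> s \notin T ->
   [/\ 0 < P s p.1 p.2, 0 < v p.2 & (rk p.2 < rk s)%N]).
  by case/choice => F HF; exists F.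
move=> s; case: (boolP (s \in T)) => sT.
  have [a [la auniq Pss]] := HT sT; exists (a, s); split=> // /=.
  apply/OptE'; split=> //; rewrite vT1 // (bigD1 s) //= Pss vT1 // mul1r.
  suff -> : \sum_(y | y != s) P s a y * v y = 0 by rewrite addr0.
  have H0 : \sum_(y | y != s) P s a y = 0.
    move: (Psum1 la); rewrite (bigD1 s) //= Pss => /(congr1 (fun x => x - 1)).
    by rewrite addrC addrK subrr.
  apply/eqP; rewrite eq_le; apply/andP; split; last first.
    by apply: sumr_ge0 => y _; apply: mulr_ge0; [exact: Pge0 la|exact: vge0].
  rewrite -[X in _ <= X]H0; apply: ler_sum => y _; apply: ler_piMr; [exact: Pge0 la|exact: vle1].
have [vs|vs] := boolP (0 < v s).
  have [Hin Hmin] := rk_spec vs.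
  move: Hin Hmin; case Ek : (rk s) => [|k] Hin Hmin; first by move: sT; rewrite Hin.
  move: Hin; rewrite /= finset.in_setU => /orP[Hk|].
    by have := Hmin _ Hk; rewrite ltnn.
  rewrite finset.inE => /andP[_ /asboolP [a [Oa [y yk Py]]]].
  exists (a, y); split=> //= _ _; split=> //; first exact: (Tk_pos HM Hex yk).
  have [_ Hy] := rk_spec (Tk_pos HM Hex yk).
  by have := Hy _ yk.
have vs0 : v s = 0 by apply/eqP; rewrite eq_le vge0 andbT leNgt.
case: Hex => sigma0 Hs0.
have [a Ha] : exists a, 0 < sigma0 [::] s a.
  apply: contrapT => Hn; have [H0 H1 _] := Hs0 [::] s.
  have : \sum_a sigma0 [::] s a = 0.
    apply: big1 => a _; apply/eqP; rewrite eq_le H0 andbT leNgt.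
    by apply/negP => Ha; apply: Hn; exists a.
  by rewrite H1 => /eqP; rewrite oner_eq0.
have [_ _ Hl] := Hs0 [::] s; have la := Hl _ Ha.
exists (a, s); split; last by rewrite vs0 ltxx.
apply/OptE'; split=> //; rewrite vs0; apply/eqP; rewrite eq_le.
rewrite sumr_ge0 /=; last by move=> y _; apply: mulr_ge0; [exact: Pge0 la|exact: vge0].
by rewrite -[X in _ <= X]vs0; apply: bell.
Qed.

End Memless.

Local Open Scope ring_scope.

Section Drift.
Variables (R : realType) (S A : finType) (legal : S -> A -> bool)
  (P : S -> A -> S -> R) (T : {set S}).
Hypothesis HM : is_MDP legal P.
Hypothesis Hex : exists sigma : strategy R S A, is_strategy legal sigma.
Variables (f : S -> A) (d : S -> S).

Local Notation v := (v legal P T).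
Local Notation rk := (rk legal P T).
Hypothesis Hfd : forall s, Opt legal P T s (f s) /\ (0 < v s -> s \notin T ->
   [/\ 0 < P s (f s) (d s), 0 < v (d s) & (rk (d s) < rk s)%N]).

Let vge0 s : 0 <= v s. Proof. exact: (v_ge0 T HM Hex). Qed.
Let vle1 s : v s <= 1. Proof. exact: (v_le1 T HM Hex). Qed.
Let vT1 t : t \in T -> v t = 1. Proof. exact: (vT HM Hex). Qed.
Let OptE' s a : Opt legal P T s a <-> legal s a /\ v s = \sum_s' P s a s' * v s'.
Proof. exact: (OptE T HM Hex). Qed.
Let Pge0 s a s' : legal s a -> 0 <= P s a s'. Proof. exact: P_ge0. Qed.
Let Ple1 s a s' : legal s a -> P s a s' <= 1. Proof. exact: P_le1. Qed.
Let Psum1 s a : legal s a -> \sum_s' P s a s' = 1. Proof. exact: P_sum1. Qed.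
Let lf s : legal s (f s). Proof. by have [/OptE' []] := Hfd s. Qed.

Definition sigm : strategy R S A := fun h s b => ((b == f s)%:R : R).

Lemma sigm_strat : is_strategy legal sigm.
Proof.
move=> h s; split => [b||b]; first by rewrite /sigm ler0n.
  by rewrite /sigm (bigD1 (f s)) //= eqxx big1 ?addr0 // => b /negbTE ->.
by rewrite /sigm; case: eqP => [->|] //; rewrite ltxx.
Qed.

Lemma sigm_pruned : is_pruned_strategy legal P T sigm.
Proof.
split; first exact: sigm_strat.
move=> h s a; rewrite /sigm; case: eqP => [-> _|]; first by have [] := Hfd s.
by rewrite ltxx.
Qed.

Lemma sigm_step s h r : s \notin T ->
  hit P T sigm h s r.+1 = \sum_y P s (f s) y * hit P T sigm (rcons h (s, f s)) y r.
Proof.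
move=> sT /=; rewrite (negbTE sT) (bigD1 (f s)) //= /sigm eqxx mul1r.
by rewrite [X in _ + X]big1 ?addr0 // => b /negbTE ->; rewrite mul0r.
Qed.

Definition K := (\max_(s : S) rk s)%N.
Definition pm := \prod_(s | (0 < v s) && (s \notin T)) P s (f s) (d s).
Definition L (k : nat) := (\sum_(i < k) pm ^+ i) / pm ^+ K.
Definition Lam s := if 0 < v s then L (rk s) else 0.

Lemma pm_gt0 : 0 < pm.
Proof. by apply: prodr_gt0 => s /andP[vs sT]; have [_ /(_ vs sT) []] := Hfd s. Qed.

Lemma pm_le s : 0 < v s -> s \notin T -> pm <= P s (f s) (d s).
Proof.
move=> vs sT; apply: prod_le_factor; last by rewrite vs sT.
move=> x /andP[vx xT]; have [_ /(_ vx xT) [Px _ _]] := Hfd x.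
by rewrite (ltW Px) Ple1.
Qed.

Lemma pm_le1 : pm <= 1.
Proof.
by apply: prodr_ile1 => x /andP[vx xT]; have [_ /(_ vx xT) [Px _ _]] := Hfd x;
  rewrite (ltW Px) Ple1.
Qed.

Lemma L_ge0 k : 0 <= L k.
Proof.
apply: divr_ge0; last by apply: exprn_ge0; exact: ltW pm_gt0.
by apply: sumr_ge0 => i _; apply: exprn_ge0; exact: ltW pm_gt0.
Qed.

Lemma L_mono k k' : (k <= k')%N -> L k <= L k'.
Proof.
move=> kk; rewrite /L ler_pM2r; last by rewrite invr_gt0 exprn_gt0 // pm_gt0.
rewrite -(subnKC kk) big_split_ord /= lerDl.
by apply: sumr_ge0 => i _; apply: exprn_ge0; exact: ltW pm_gt0.
Qed.

Lemma L0 : L 0 = 0.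
Proof. by rewrite /L big_ord0 mul0r. Qed.

Lemma L_id k : 1 + pm * L k + (1 - pm) * L K = L k.+1.
Proof.
have pK : pm ^+ K != 0 by rewrite expf_neq0 // gt_eqF // pm_gt0.
have HB : (1 - pm) * \sum_(i < K) pm ^+ i = 1 - pm ^+ K.
  by rewrite -opprB -(opprB (pm ^+ K)) subrX1 mulNr.
rewrite /L big_ord_recl expr0.
have -> : \sum_(i < k) pm ^+ bump 0 i = pm * \sum_(i < k) pm ^+ i.
  by rewrite big_distrr; apply: eq_bigr => i _; rewrite exprS.
rewrite [X in _ + X]mulrA HB.
move: (\sum_(i < k) pm ^+ i) pK => a; move: (pm ^+ K) => z zn0.
by field.
Qed.

Lemma Lam_ge0 s : 0 <= Lam s.
Proof. by rewrite /Lam; case: ifP => _ //; exact: L_ge0. Qed.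

Lemma Lam_le s : Lam s <= L K.
Proof.
rewrite /Lam; case: ifP => _; last exact: L_ge0.
by apply: L_mono; exact: leq_bigmax.
Qed.

Lemma drift s : 0 < v s -> s \notin T ->
  1 + \sum_y P s (f s) y * Lam y <= Lam s.
Proof.
move=> vs sT; have [_ /(_ vs sT) [Pd vd rkd]] := Hfd s.
rewrite /Lam vs; move: rkd; case Ek : (rk s) => [//|k] rkd.
set q := P s (f s) (d s).
have Hsum : \sum_y P s (f s) y * Lam y <= q * L k + (1 - q) * L K.
  rewrite (bigD1 (d s)) //= -/q.
  have -> : 1 - q = \sum_(y | y != d s) P s (f s) y.
    by rewrite -(Psum1 (lf s)) (bigD1 (d s)) //= -/q addrC addrK.
  rewrite big_distrl /=; apply: lerD.
    apply: ler_wpM2l; first exact: ltW.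
    by rewrite /Lam vd; apply: L_mono.
  apply: ler_sum => y _; apply: ler_wpM2l; first exact: Pge0 (lf s).
  exact: Lam_le.
have pq : pm <= q by exact: pm_le.
have LkK : L k <= L K.
  apply: L_mono; apply: ltnW; rewrite -Ek; exact: (leq_bigmax (F := rk) s).
rewrite -L_id -addrA lerD2l; apply: le_trans Hsum _.
have E : pm * L k + (1 - pm) * L K - (q * L k + (1 - q) * L K) =
   (q - pm) * (L K - L k) by ring.
by rewrite -subr_ge0 E; apply: mulr_ge0; rewrite subr_ge0.
Qed.


Lemma hit_0 sigma h s : hit P T sigma h s 0 = if s \in T then 1 else 0.
Proof. by []. Qed.

Lemma hitT_S sigma h s r : s \in T -> hit P T sigma h s r.+1 = 0.
Proof. by move=> sT /=; rewrite sT. Qed.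

Definition hsum h s n := \sum_(0 <= r < n) hit P T sigm h s r.
Definition gsum h s n := \sum_(0 <= r < n) r%:R * hit P T sigm h s r.

Lemma hsum_ge0 h s n : 0 <= hsum h s n.
Proof. by apply: sumr_ge0 => r _; exact: (hge0 T HM sigm_strat). Qed.

Lemma gsum_ge0 h s n : 0 <= gsum h s n.
Proof.
by apply: sumr_ge0 => r _; apply: mulr_ge0; [exact: ler0n|exact: (hge0 T HM sigm_strat)].
Qed.

Lemma hsum_le h s n : hsum h s n <= v s.
Proof. exact: (psum_le_v T HM Hex sigm_strat n h s). Qed.

Lemma drift_claim n : forall h s, gsum h s n + n%:R * (v s - hsum h s n) <= Lam s.
Proof.
have Hs := sigm_strat.
elim: n => [|n IH] h s.
  by rewrite /gsum /hsum !big_geq // add0r mul0r; exact: Lam_ge0.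
case sT : (s \in T).
  have E1 : hsum h s n.+1 = 1.
    rewrite /hsum big_nat_recl // hit_0 sT big1 ?addr0 // => r _.
    exact: hitT_S.
  have E2 : gsum h s n.+1 = 0.
    rewrite /gsum big_nat_recl // mul0r add0r big1 // => r _.
    by rewrite hitT_S // mulr0.
  by rewrite E1 E2 vT1 // subrr mulr0 addr0; exact: Lam_ge0.
case vs : (0 < v s); last first.
  have v0 : v s = 0 by apply/eqP; rewrite eq_le vge0 andbT leNgt vs.
  have Z r h' : hit P T sigm h' s r = 0 by exact: (hit_v0 HM Hex Hs).
  rewrite /gsum /hsum v0 !big1 => [| r _ | r _]; rewrite ?Z ?mulr0 //.
  by rewrite subrr mulr0 addr0; exact: Lam_ge0.
set h' := rcons h (s, f s).
have sT' : s \notin T by rewrite sT.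
have Eh : hsum h s n.+1 = \sum_y P s (f s) y * hsum h' y n.
  rewrite /hsum big_nat_recl // hit_0 sT add0r.
  under eq_bigr do rewrite sigm_step //.
  rewrite exchange_big /=; apply: eq_bigr => y _; by rewrite big_distrr.
have Eg : gsum h s n.+1 = \sum_y P s (f s) y * (gsum h' y n + hsum h' y n).
  rewrite /gsum big_nat_recl // mul0r add0r.
  under eq_bigr do rewrite sigm_step // -natr1 mulrDl mul1r big_distrr -big_split.
  rewrite /= exchange_big /=; apply: eq_bigr => y _.
  rewrite /gsum /hsum mulrDr !big_distrr -big_split /=; apply: eq_bigr => r _.
  by ring.
have [_ vE] := (OptE' s (f s)).1 (proj1 (Hfd s)).
rewrite Eh Eg {1}vE.
have -> : \sum_y P s (f s) y * (gsum h' y n + hsum h' y n) +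
    n.+1%:R * (\sum_y P s (f s) y * v y - \sum_y P s (f s) y * hsum h' y n) =
    \sum_y (P s (f s) y * (gsum h' y n + n%:R * (v y - hsum h' y n)) +
       P s (f s) y * v y).
  rewrite -sumrB big_distrr -big_split /=; apply: eq_bigr => y _.
  by rewrite -natr1; ring.
rewrite big_split /= -vE.
apply: le_trans (drift vs sT'); rewrite addrC lerD ?vle1 //.
apply: ler_sum => y _; apply: ler_wpM2l; first exact: Pge0 (lf s).
exact: IH.
Qed.

Lemma sigm_reach s : 0 < v s -> PrReach P T sigm s = (v s)%:E.
Proof.
move=> vs; apply/le_anti/andP; split.
  by rewrite -(ValE T HM Hex); exact: (Val_ge P T s sigm_strat).
apply/lee_addgt0Pr => e e0.
have x0 : 0 <= Lam s / e by apply: divr_ge0; [exact: Lam_ge0|exact: ltW].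
have := archi_boundP x0; set N := Num.Def.archi_bound _ => HN.
have N0 : 0 < N%:R :> R by apply: le_lt_trans HN.
have H1 := drift_claim N [::] s.
have H3 : N%:R * (v s - hsum [::] s N) <= gsum [::] s N + N%:R * (v s - hsum [::] s N).
  by rewrite lerDr gsum_ge0.
have H4 : Lam s < N%:R * e by rewrite -ltr_pdivrMr.
have H2 : N%:R * (v s - hsum [::] s N) < N%:R * e.
  exact: le_lt_trans (le_trans H3 H1) H4.
rewrite ltr_pM2l // ltrBlDl addrC in H2.
apply: le_trans (_ : (hsum [::] s N + e)%:E <= _)%E.
  rewrite lee_fin; lra.
rewrite EFinD leeD2r //; apply: series_ge => r.
exact: (hge0 T HM sigm_strat).
Qed.

Lemma sigm_len s :
  (\sum_(r <oo) (r%:R * hit P T sigm [::] s r)%:E <= (Lam s)%:E)%E.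
Proof.
apply: series_le => [r|n].
  by apply: mulr_ge0; [exact: ler0n|exact: (hge0 T HM sigm_strat)].
apply: le_trans (drift_claim n [::] s); rewrite lerDl; apply: mulr_ge0 => //.
by rewrite subr_ge0 hsum_le.
Qed.

End Drift.

Local Open Scope ring_scope.

Section Final.
Variables (R : realType) (S A : finType) (legal : S -> A -> bool)
  (P : S -> A -> S -> R) (T : {set S}).
Hypothesis HM : is_MDP legal P.
Hypothesis Hex : exists sigma : strategy R S A, is_strategy legal sigma.

Local Notation v := (v legal P T).
Let vge0 s : 0 <= v s. Proof. exact: (v_ge0 T HM Hex). Qed.
Let vle1 s : v s <= 1. Proof. exact: (v_le1 T HM Hex). Qed.
Let vT1 t : t \in T -> v t = 1. Proof. exact: (vT HM Hex). Qed.
Let bell s a : s \notin T -> legal s a -> \sum_s' P s a s' * v s' <= v s.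
Proof. exact: (bellman HM Hex). Qed.
Let OptE' s a : Opt legal P T s a <-> legal s a /\ v s = \sum_s' P s a s' * v s'.
Proof. exact: (OptE T HM Hex). Qed.
Let Pge0 s a s' : legal s a -> 0 <= P s a s'. Proof. exact: P_ge0. Qed.
Let Psum1 s a : legal s a -> \sum_s' P s a s' = 1. Proof. exact: P_sum1. Qed.

Lemma PrReach_fin sigma s : is_strategy legal sigma ->
  PrReach P T sigma s = (fine (PrReach P T sigma s))%:E.
Proof.
move=> Hs; rewrite fineK // ge0_fin_numE ?(PrReach_ge0 T HM s Hs) //.
exact: le_lt_trans (PrReach_le1 T HM s Hs) (ltry _).
Qed.

Section S0.
Variable s0 : S.
Hypothesis vs0 : 0 < v s0.

Lemma hit_pr sigma : is_strategy legal sigma -> forall r,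
  hit (Ppruned legal P T) T sigma [::] s0 r = (v s0)^-1 * hit P T sigma [::] s0 r.
Proof.
move=> Hs r; rewrite -(hit_pruned T HM Hex Hs r [::] s0) mulKf //.
exact: lt0r_neq0.
Qed.

Lemma PrReach_pr sigma : is_strategy legal sigma ->
  (PrReach (Ppruned legal P T) T sigma s0 = ((v s0)^-1)%:E * PrReach P T sigma s0)%E.
Proof.
move=> Hs; rewrite /PrReach -nneseriesZl; last first.
  by move=> r _; rewrite lee_fin; exact: (hge0 T HM Hs).
by apply: congr_lim; apply/funext => n; apply: eq_bigr => r _; rewrite hit_pr // EFinM.
Qed.

Lemma wsum_pr sigma : is_strategy legal sigma ->
  (\sum_(r <oo) (r%:R * hit (Ppruned legal P T) T sigma [::] s0 r)%:E =
  ((v s0)^-1)%:E * \sum_(r <oo) (r%:R * hit P T sigma [::] s0 r)%:E)%E.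
Proof.
move=> Hs; rewrite -nneseriesZl; last first.
  move=> r _; rewrite lee_fin; apply: mulr_ge0; first exact: ler0n.
  exact: (hge0 T HM Hs).
apply: congr_lim; apply/funext => n; apply: eq_bigr => r _.
by rewrite hit_pr // -EFinM mulrCA.
Qed.

Lemma ExpLen_eq sigma : is_strategy legal sigma ->
  PrReach P T sigma s0 = (v s0)%:E ->
  ExpLenPruned legal P T sigma s0 = CondExpLen P T sigma s0.
Proof.
move=> Hs HP; rewrite /ExpLenPruned /= PrReach_pr // HP -EFinM mulVf ?lt0r_neq0 //.
rewrite subee // mule0 adde0 wsum_pr // /CondExpLen HP -nneseriesZl; last first.
  move=> r _; rewrite lee_fin; apply: mulr_ge0; first exact: ler0n.
  exact: (hge0 T HM Hs).
apply: congr_lim; apply/funext => n; apply: eq_bigr => r _.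
by rewrite inver (negbTE (lt0r_neq0 vs0)) muleC.
Qed.

End S0.
End Final.

Local Open Scope ring_scope.

Section Modif.
Variables (R : realType) (S A : finType) (legal : S -> A -> bool)
  (P : S -> A -> S -> R) (T : {set S}).
Hypothesis HM : is_MDP legal P.
Hypothesis Hex : exists sigma : strategy R S A, is_strategy legal sigma.

Local Notation v := (v legal P T).
Let vge0 s : 0 <= v s. Proof. exact: (v_ge0 T HM Hex). Qed.
Let vle1 s : v s <= 1. Proof. exact: (v_le1 T HM Hex). Qed.
Let bell s a : s \notin T -> legal s a -> \sum_s' P s a s' * v s' <= v s.
Proof. exact: (bellman HM Hex). Qed.
Let OptE' s a : Opt legal P T s a <-> legal s a /\ v s = \sum_s' P s a s' * v s'.
Proof. exact: (OptE T HM Hex). Qed.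
Let Pge0 s a s' : legal s a -> 0 <= P s a s'. Proof. exact: P_ge0. Qed.

Definition PrH sigma h s := (\sum_(r <oo) (hit P T sigma h s r)%:E)%E.

Variable sigma : strategy R S A.
Hypothesis Hs : is_strategy legal sigma.

Lemma sp_ge0 h s b s' : 0 <= sigma h s b * P s b s'.
Proof.
have [H0 _ Hl] := Hs h s; have := H0 b; rewrite le_eqVlt => /orP[/eqP <-|sb].
  by rewrite mul0r.
by apply: mulr_ge0; [exact: ltW|exact: Pge0 (Hl _ sb)].
Qed.

Lemma PrH_ge0 h s : (0 <= PrH sigma h s)%E.
Proof. by apply: series_ge0 => r; exact: (hge0 T HM Hs). Qed.

Lemma PrH_le h s : (PrH sigma h s <= (v s)%:E)%E.
Proof.
apply: series_le => [r|n]; first exact: (hge0 T HM Hs).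
exact: (psum_le_v T HM Hex Hs).
Qed.

Lemma PrH_fin h s : PrH sigma h s = (fine (PrH sigma h s))%:E.
Proof.
rewrite fineK // ge0_fin_numE ?PrH_ge0 //.
exact: le_lt_trans (PrH_le h s) (ltry _).
Qed.

Lemma PrH_step h s : s \notin T ->
  PrH sigma h s = (\sum_b \sum_s' (sigma h s b * P s b s')%:E *
                    PrH sigma (rcons h (s, b)) s')%E.
Proof.
move=> sT; rewrite /PrH series_shift; last by move=> r; exact: (hge0 T HM Hs r h s).
have -> : hit P T sigma h s 0 = 0 by rewrite /= (negbTE sT).
rewrite add0e.
have -> : (\sum_(r <oo) (hit P T sigma h s r.+1)%:E =
   \sum_(r <oo) \sum_b \sum_s' ((sigma h s b * P s b s')%:E *
      (hit P T sigma (rcons h (s, b)) s' r)%:E))%E.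
  apply: congr_lim; apply/funext => n; apply: eq_bigr => r _.
  rewrite /= (negbTE sT) -sumEFin; apply: eq_bigr => b _.
  rewrite big_distrr -sumEFin; apply: eq_bigr => s' _.
  by rewrite -EFinM /= mulrA.
rewrite nneseries_sum; last first.
  move=> b r _; apply: sume_ge0 => s' _; rewrite -EFinM lee_fin.
  by apply: mulr_ge0; [exact: sp_ge0|exact: (hge0 T HM Hs)].
apply: eq_bigr => b _; rewrite nneseries_sum; last first.
  move=> s' r _; rewrite -EFinM lee_fin.
  by apply: mulr_ge0; [exact: sp_ge0|exact: (hge0 T HM Hs)].
apply: eq_bigr => s' _; rewrite nneseriesZl // => r _.
by rewrite lee_fin; exact: (hge0 T HM Hs).
Qed.

Lemma opt_path h s : s \notin T -> PrH sigma h s = (v s)%:E ->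
  forall b, 0 < sigma h s b -> Opt legal P T s b /\
    forall s', 0 < P s b s' -> PrH sigma (rcons h (s, b)) s' = (v s')%:E.
Proof.
move=> sT HPr.
pose x b s' := fine (PrH sigma (rcons h (s, b)) s').
have xE b s' : PrH sigma (rcons h (s, b)) s' = (x b s')%:E by exact: PrH_fin.
have xle b s' : x b s' <= v s' by rewrite -lee_fin -xE PrH_le.
have [H0 H1 Hl] := Hs h s.
have Hv : v s = \sum_b \sum_s' sigma h s b * P s b s' * x b s'.
  apply/eqP; rewrite -(@eqe R) -HPr PrH_step // -sumEFin; apply/eqP.
  apply: eq_bigr => b _; rewrite -sumEFin; apply: eq_bigr => s' _.
  by rewrite xE -EFinM.
pose D b := sigma h s b * (v s - \sum_s' P s b s' * v s').
pose E b s' := sigma h s b * P s b s' * (v s' - x b s').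
have D0 b : 0 <= D b.
  rewrite /D; have := H0 b; rewrite le_eqVlt => /orP[/eqP <-|sb]; first by rewrite mul0r.
  by apply: mulr_ge0; [exact: ltW|rewrite subr_ge0; exact: bell sT (Hl _ sb)].
have E0 b s' : 0 <= E b s'.
  by apply: mulr_ge0; [exact: sp_ge0|rewrite subr_ge0].
have Hsum : \sum_b (D b + \sum_s' E b s') = 0.
  have -> : \sum_b (D b + \sum_s' E b s') =
      \sum_b (sigma h s b * v s - \sum_s' sigma h s b * P s b s' * x b s').
    apply: eq_bigr => b _; rewrite /D /E.
    have -> : \sum_s' sigma h s b * P s b s' * (v s' - x b s') =
        sigma h s b * \sum_s' P s b s' * v s' -
        \sum_s' sigma h s b * P s b s' * x b s'.
      rewrite big_distrr -sumrB; apply: eq_bigr => s' _ /=; ring.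
    ring.
  by rewrite sumrB -big_distrl /= H1 mul1r -Hv subrr.
move=> b sb.
have Hb : D b + \sum_s' E b s' = 0.
  by apply: (psumr_eq0P _ Hsum) => // c _; apply: addr_ge0 => //; apply: sumr_ge0.
move/eqP: Hb; rewrite paddr_eq0 //; last by apply: sumr_ge0.
case/andP=> /eqP HD /eqP HE; split.
  apply/OptE'; split; first exact: Hl.
  move: HD; rewrite /D => /eqP; rewrite mulf_eq0 gt_eqF //= subr_eq0 => /eqP //.
move=> s' Ps'; rewrite xE.
have := psumr_eq0P (fun c _ => E0 b c) HE (i := s') isT.
move/eqP; rewrite /E !mulf_eq0 (gt_eqF sb) (gt_eqF Ps') /= subr_eq0 => /eqP ->.
by [].
Qed.

End Modif.

Local Open Scope ring_scope.

Section Mod2.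
Variables (R : realType) (S A : finType) (legal : S -> A -> bool)
  (P : S -> A -> S -> R) (T : {set S}).
Hypothesis HM : is_MDP legal P.
Hypothesis Hex : exists sigma : strategy R S A, is_strategy legal sigma.
Local Notation v := (v legal P T).

Variables (sigma tau : strategy R S A).
Hypothesis Hs : is_strategy legal sigma.
Hypothesis Ht : is_pruned_strategy legal P T tau.

Definition smod : strategy R S A := fun h s =>
  if pselect (forall b, 0 < sigma h s b -> Opt legal P T s b) then sigma h s
  else tau h s.

Lemma smod_pruned : is_pruned_strategy legal P T smod.
Proof.
split.
  move=> h s; rewrite /smod.
  case: (pselect (forall b, 0 < sigma h s b -> Opt legal P T s b)) => H.
    exact: Hs.
  exact: Ht.1.
move=> h s a; rewrite /smod.
case: (pselect (forall b, 0 < sigma h s b -> Opt legal P T s b)) => H.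
  exact: H.
exact: Ht.2.
Qed.

Lemma smod_hit r : forall h s, PrH P T sigma h s = (v s)%:E ->
  hit P T smod h s r = hit P T sigma h s r.
Proof.
elim: r => [//|r IH] h s HP /=; case: ifP => // sT.
have sT' : s \notin T by rewrite sT.
have Hopt := opt_path HM Hex Hs sT' HP.
have -> : smod h s = sigma h s.
  rewrite /smod; case: (pselect (forall b, 0 < sigma h s b -> Opt legal P T s b)) => // H.
  exfalso; apply: H => b sb.
  exact: (Hopt b sb).1.
apply: eq_bigr => b _.
have [_ _ _] := Hs h s.
have [H0 _ _] := Hs h s; have := H0 b; rewrite le_eqVlt => /orP[/eqP <-|sb].
  by rewrite !mul0r.
congr (_ * _); apply: eq_bigr => s' _.
have [->|Pn] := eqVneq (P s b s') 0; first by rewrite !mul0r.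
have [_ _ Hl] := Hs h s.
have Pp : 0 < P s b s' by rewrite lt_neqAle eq_sym Pn (P_ge0 HM _ (Hl _ sb)).
by rewrite IH //; exact: (Hopt b sb).2.
Qed.
End Mod2.

Local Open Scope ereal_scope.

Theorem theorem1 (R : realType) (S A : finType)
    (legal : S -> A -> bool) (P : S -> A -> S -> R) (T : {set S}) (s0 : S)
    (sigma_star : strategy R S A) :
  is_MDP legal P ->
  sinks legal P T ->
  0 < Val legal P T s0 ->
  is_pruned_strategy legal P T sigma_star ->
  (forall sigma, is_pruned_strategy legal P T sigma ->
     ExpLenPruned legal P T sigma_star s0 <= ExpLenPruned legal P T sigma s0) ->
  PrReach P T sigma_star s0 = Val legal P T s0 /\
  (sigma_star \in OptReachStrats legal P T s0 /\
   forall sigma, sigma \in OptReachStrats legal P T s0 ->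
     CondExpLen P T sigma_star s0 <= CondExpLen P T sigma s0).
Proof.
move=> HM HT HV Hstar Hmin.
have Hex : exists sigma : strategy R S A, is_strategy legal sigma.
  by have [_ [sigma Hs _] _] := ereal_sup_gt HV; exists sigma.
have vs0 : (0 < v legal P T s0)%R by rewrite -lte_fin -(ValE T HM Hex).
have [F HF] := choose_fd HM HT Hex.
pose f s := (F s).1; pose d s := (F s).2.
have Hfd : forall s, Opt legal P T s (f s) /\ ((0 < v legal P T s)%R -> s \notin T ->
   [/\ (0 < P s (f s) (d s))%R, (0 < v legal P T (d s))%R &
       (rk legal P T (d s) < rk legal P T s)%N]) by exact: HF.
pose sm := sigm R f.
have Hsm : is_pruned_strategy legal P T sm := sigm_pruned HM Hex Hfd.
have Hsm_reach : PrReach P T sm s0 = (v legal P T s0)%:E := sigm_reach HM Hex Hfd vs0.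
have Hs_star := Hstar.1.
have Efin : ExpLenPruned legal P T sigma_star s0 < +oo.
  apply: le_lt_trans (Hmin _ Hsm) _.
  rewrite /ExpLenPruned /= (PrReach_pr HM Hex vs0 Hsm.1) Hsm_reach -EFinM.
  rewrite mulVf ?lt0r_neq0 // subee // mule0 adde0 (wsum_pr HM Hex vs0 Hsm.1).
  apply: le_lt_trans (_ : _ <= ((v legal P T s0)^-1)%:E * (Lam legal P T f d s0)%:E) _.
    apply: lee_wpmul2l; first by rewrite lee_fin invr_ge0 ltW.
    exact: (sigm_len HM Hex Hfd s0).
  by rewrite -EFinM ltry.
have Hp := PrReach_fin T HM s0 Hs_star.
set p := fine _ in Hp.
have ple : (p <= v legal P T s0)%R.
  by rewrite -lee_fin -Hp -(ValE T HM Hex); exact: (Val_ge P T s0 Hs_star).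
have X0 : 0 <= \sum_(r <oo) (r%:R * hit (Ppruned legal P T) T sigma_star [::] s0 r)%:E.
  apply: series_ge0 => r; apply: mulr_ge0; first exact: ler0n.
  rewrite (hit_pr HM Hex vs0 Hs_star); apply: mulr_ge0; first by rewrite invr_ge0 ltW.
  exact: (hge0 T HM Hs_star r [::] s0).
have pv : p = v legal P T s0.
  apply/eqP; rewrite eq_le ple /= leNgt; apply/negP => plt.
  move: Efin; rewrite /ExpLenPruned /= (PrReach_pr HM Hex vs0 Hs_star) Hp -EFinM.
  have q0 : (0 < 1 - (v legal P T s0)^-1 * p)%R.
    by rewrite subr_gt0 mulrC ltr_pdivrMr // mul1r.
  rewrite -EFinB gt0_mulye ?lte_fin // addey ?ltxx //.
  apply/negP => /eqP HX; move: X0; rewrite HX.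
  by rewrite leNgt ltNyr.
have Hopt_star : PrReach P T sigma_star s0 = Val legal P T s0.
  by rewrite Hp pv (ValE T HM Hex).
split => //; split; first by apply: mem_set; split.
move=> sigma /set_mem [Hs HPs].
pose tau := smod legal P T sigma sm.
have Htau : is_pruned_strategy legal P T tau := smod_pruned Hs Hsm.
have HPs' : PrH P T sigma [::] s0 = (v legal P T s0)%:E by rewrite -(ValE T HM Hex).
have Hhit r : hit P T tau [::] s0 r = hit P T sigma [::] s0 r.
  exact: (smod_hit HM Hex sm Hs r HPs').
have Ptau : PrReach P T tau s0 = PrReach P T sigma s0.
  by rewrite /PrReach; apply: congr_lim; apply/funext => n; apply: eq_bigr => r _; rewrite Hhit.
have Ctau : CondExpLen P T tau s0 = CondExpLen P T sigma s0.
  rewrite /CondExpLen Ptau; apply: congr_lim; apply/funext => n; apply: eq_bigr => r _.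
  by rewrite Hhit.
rewrite -Ctau -(ExpLen_eq HM Hex vs0 Hs_star) ?Hopt_star ?(ValE T HM Hex) //.
rewrite -(ExpLen_eq HM Hex vs0 Htau.1); first exact: Hmin.
by rewrite Ptau HPs (ValE T HM Hex).
Qed.
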